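(* Let $\Gamma$ be a Shilla distance-regular graph with $b(\Gamma)=b$ and eigenvalues $\theta_0>\theta_1>\theta_2>\theta_3$. Then: (i) $q^2_{11}>0$; (ii) $q^3_{11}\geq 0$ if and only if $\theta_3\geq -\frac{b(bb_2+c_2)}{b_2+c_2}$. In particular, $\theta_3\geq -\frac{b(bb_2+c_2)}{b_2+c_2}$.
   Context: A connected graph $\Gamma$ of diameter $D$ is distance-regular if there are integers $b_i,c_i$ ($0\le i\le D$) such that for any two vertices $x,y$ at distance $i$, exactly $c_i$ neighbours of $y$ are at distance $i-1$ from $x$ and exactly $b_i$ neighbours of $y$ are at distance $i+1$ from $x$. Then $\Gamma$ is regular of valency $k=b_0$, and $a_i:=k-b_i-c_i$. Its eigenvalues (of the adjacency matrix) are $k=\theta_0>\theta_1>\dots>\theta_D$. A Shilla distance-regular graph is a distance-regular graph of diameter $3$ whose second largest eigenvalue satisfies $\theta_1=a_3$; for such graphs $k=(a_3-a_1)a_3$ and $b(\Gamma):=a_3-a_1=k/a_3$. Let $n$ be the number of vertices and $E_i$ the orthogonal projection onto the eigenspace of $\theta_i$. The Krein parameters $q^h_{ij}$ are defined by $E_i\circ E_j=\frac1n\sum_{h=0}^D q^h_{ij}E_h$, where $\circ$ is the entrywise product. *)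

(* Defs.v *)
From HB Require Import structures.
From mathcomp Require Import all_boot all_order all_algebra.
From mathcomp Require Import reals.
Set Implicit Arguments. Unset Strict Implicit. Unset Printing Implicit Defensive.
Import Order.TTheory GRing.Theory Num.Theory.

(* A simple graph on the vertex set 'I_n is given by an adjacency relation
   e : rel 'I_n (required symmetric and irreflexive below). *)

Fixpoint within (n : nat) (e : rel 'I_n) (k : nat) (x y : 'I_n) : bool :=
  match k with
  | 0 => x == y
  | k'.+1 => within e k' x y || [exists z, within e k' x z && e z y]
  end.

(* Graph distance: least k with a walk of length <= k (valid for connected
   graphs, where it is < n). *)
Definition dist (n : nat) (e : rel 'I_n) (x y : 'I_n) : nat :=
  find (fun k => within e k x y) (iota 0 n).

Definition distance_regular (n : nat) (e : rel 'I_n) (D : nat)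
    (b c : nat -> nat) : Prop :=
  [/\ symmetric e, irreflexive e,
      (forall x y, within e D x y),
      (exists x y, ~~ within e D.-1 x y) &
      (forall x y, dist e x y <= D ->
         #|[set z | e y z && (dist e x z == (dist e x y).-1)]| = c (dist e x y)
      /\ #|[set z | e y z && (dist e x z == (dist e x y).+1)]| = b (dist e x y))].

Definition inter_a (R : ringType) (b c : nat -> nat) (i : nat) : R :=
  (b 0)%:R - (b i)%:R - (c i)%:R.

Local Open Scope ring_scope.

Definition adjacency (R : ringType) (n : nat) (e : rel 'I_n) : 'M[R]_n :=
  \matrix_(x, y) (e x y)%:R.

Definition orth_proj_eigenspace (R : fieldType) (n : nat) (A E : 'M[R]_n)
    (theta : R) : Prop :=
  [/\ E^T = E, E *m E = E & (E :=: eigenspace A theta)%MS].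

Definition hadamard (R : ringType) (n : nat) (M N : 'M[R]_n) : 'M[R]_n :=
  \matrix_(x, y) (M x y * N x y).

(* Main.v *)
Require Import Defs.
From HB Require Import structures.
From mathcomp Require Import all_boot all_order all_algebra.
From mathcomp Require Import reals.
From mathcomp Require Import zify ring lra.
Import Order.TTheory GRing.Theory Num.Theory.
Set Implicit Arguments. Unset Strict Implicit.
Local Open Scope ring_scope.

Section Krein.
Variables (R : realType) (n : nat).

Lemma idem_entry (F : 'M[R]_n) : F^T = F -> F *m F = F ->
  forall x y, F x y = \sum_w F x w * F y w.
Proof.
move=> Ft Fi x y; rewrite -{1}Fi mxE; apply: eq_bigr => w _.
by rewrite -{2}Ft mxE.
Qed.

Lemma psd (F : 'M[R]_n) : F^T = F -> F *m F = F ->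
  forall u : 'I_n -> R, 0 <= \sum_x \sum_y u x * F x y * u y.
Proof.
move=> Ft Fi u.
have -> : \sum_x \sum_y u x * F x y * u y = \sum_w (\sum_x u x * F x w) ^+ 2.
  transitivity (\sum_x \sum_y \sum_w (u x * F x w) * (u y * F y w)).
    apply: eq_bigr => x _; apply: eq_bigr => y _.
    rewrite (idem_entry Ft Fi) mulr_sumr mulr_suml; apply: eq_bigr => w _; ring.
  under eq_bigr => x _ do rewrite exchange_big /=.
  rewrite exchange_big /=; apply: eq_bigr => w _.
  rewrite expr2 mulr_suml; apply: eq_bigr => x _; by rewrite mulr_sumr.
by apply: sumr_ge0 => w _; exact: sqr_ge0.
Qed.

Lemma schur (F : 'M[R]_n) : F^T = F -> F *m F = F ->
  forall v : 'I_n -> R, 0 <= \sum_x \sum_y v x * (F x y * F x y) * v y.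
Proof.
move=> Ft Fi v.
have -> : \sum_x \sum_y v x * (F x y * F x y) * v y = \sum_x \sum_y \sum_w (v x * F x w) * F x y * (v y * F y w).
  apply: eq_bigr => x _; apply: eq_bigr => y _.
  transitivity (v x * F x y * v y * \sum_w F x w * F y w); first by rewrite -(idem_entry Ft Fi); ring.
  rewrite mulr_sumr; apply: eq_bigr => w _; ring.
under eq_bigr => x _ do rewrite exchange_big /=.
rewrite exchange_big /=; apply: sumr_ge0 => w _.
exact: (psd Ft Fi (fun x => v x * F x w)).
Qed.

Lemma krein (F G : 'M[R]_n) : F^T = F -> F *m F = F -> G^T = G -> G *m G = G ->
  0 <= \tr (hadamard F F *m G).
Proof.
move=> Ft Fi Gt Gi; rewrite /mxtrace.
have -> : \sum_x (hadamard F F *m G) x x = \sum_x \sum_y \sum_z G x z * (F x y * F x y) * G y z.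
  apply: eq_bigr => x _; rewrite mxE; apply: eq_bigr => y _.
  rewrite mxE (idem_entry Gt Gi y x) mulr_sumr; apply: eq_bigr => z _; ring.
under eq_bigr => x _ do rewrite exchange_big /=.
rewrite exchange_big /=; apply: sumr_ge0 => z _.
exact: (schur Ft Fi (fun x => G x z)).
Qed.

Lemma tr_pos (G : 'M[R]_n) : G^T = G -> G *m G = G -> G != 0 -> 0 < \tr G.
Proof.
move=> Gt Gi nz; rewrite /mxtrace.
have h : forall x, G x x = \sum_y G x y ^+ 2.
  by move=> x; rewrite (idem_entry Gt Gi); apply: eq_bigr => y _; rewrite expr2.
under eq_bigr => x _ do rewrite h.
rewrite lt_def sumr_ge0 ?andbT; last by move=> x _; apply: sumr_ge0 => y _; exact: sqr_ge0.
apply: contra nz => /eqP h0; apply/eqP/matrixP => x y; rewrite mxE.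
have hx : \sum_y G x y ^+ 2 = 0.
  apply: (psumr_eq0P _ h0) => // i _; apply: sumr_ge0 => j _; exact: sqr_ge0.
have : G x y ^+ 2 = 0.
  apply: (psumr_eq0P _ hx) => // i _; exact: sqr_ge0.
by move/eqP; rewrite sqrf_eq0 => /eqP.
Qed.
End Krein.

Lemma cubic0 (R : fieldType) (b0 b1 b2 b3 t0 t1 t2 t3 : R) :
  t0 != t1 -> t0 != t2 -> t0 != t3 -> t1 != t2 -> t1 != t3 -> t2 != t3 ->
  b3*t0*t0*t0 + b2*t0*t0 + b1*t0 + b0 = 0 ->
  b3*t1*t1*t1 + b2*t1*t1 + b1*t1 + b0 = 0 ->
  b3*t2*t2*t2 + b2*t2*t2 + b1*t2 + b0 = 0 ->
  b3*t3*t3*t3 + b2*t3*t3 + b1*t3 + b0 = 0 ->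
  [/\ b3 = 0, b2 = 0, b1 = 0 & b0 = 0].
Proof.
move=> n01 n02 n03 n12 n13 n23 p0 p1 p2 p3.
have mz : forall u v w : R, u != v -> (v - u) * w = 0 -> w = 0.
  move=> u v w uv /eqP; rewrite mulf_eq0 subr_eq0 eq_sym (negbTE uv) /= => /eqP //.
pose q u v := b3*(u*u+u*v+v*v) + b2*(u+v) + b1.
have q01 : q t0 t1 = 0 by apply: (mz _ _ _ n01); rewrite /q -[0](subrr 0) -{1}p1 -p0; ring.
have q02 : q t0 t2 = 0 by apply: (mz _ _ _ n02); rewrite /q -[0](subrr 0) -{1}p2 -p0; ring.
have q03 : q t0 t3 = 0 by apply: (mz _ _ _ n03); rewrite /q -[0](subrr 0) -{1}p3 -p0; ring.
pose r v := b3*(t0+t1+v) + b2.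
have r2 : r t2 = 0 by apply: (mz _ _ _ n12); rewrite /r -[0](subrr 0) -{1}q02 -q01 /q; ring.
have r3 : r t3 = 0 by apply: (mz _ _ _ n13); rewrite /r -[0](subrr 0) -{1}q03 -q01 /q; ring.
have e3 : b3 = 0 by apply: (mz _ _ _ n23); rewrite -[0](subrr 0) -{1}r3 -r2 /r; ring.
have e2 : b2 = 0 by move: r2; rewrite /r e3 mul0r add0r.
have e1 : b1 = 0 by move: q01; rewrite /q e3 e2 !mul0r !add0r.
split => //; by move: p0; rewrite e3 e2 e1 !mul0r !add0r.
Qed.

Local Close Scope ring_scope.
Section Graph.
Variables (n : nat) (e : rel 'I_n).
Hypothesis esym : symmetric e.
Hypothesis eirr : irreflexive e.

Lemma within_S k x y : within e k.+1 x y = within e k x y || [exists z, within e k x z && e z y].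
Proof. by []. Qed.

Lemma within_mono k x y : within e k x y -> within e k.+1 x y.
Proof. by move=> h; rewrite within_S h. Qed.

Lemma within_le k m x y : k <= m -> within e k x y -> within e m x y.
Proof.
move=> /subnK <-; elim: (m - k) => [//|d IH] h; exact/within_mono/IH.
Qed.

Lemma within_step k x y z : within e k x y -> e y z -> within e k.+1 x z.
Proof. by move=> h1 h2; rewrite within_S; apply/orP; right; apply/existsP; exists y; rewrite h1. Qed.

Lemma within_pre k x y z : e x y -> within e k y z -> within e k.+1 x z.
Proof.
elim: k z => [|k IH] z exy.
  move/eqP<-; rewrite within_S; apply/orP; right; apply/existsP; exists x; rewrite /= eqxx; exact: exy.
rewrite within_S; case/orP => [h|/existsP[w /andP[h1 h2]]].
  by apply: within_mono; apply: IH.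
by apply: (within_step (IH _ exy h1)) h2.
Qed.

Lemma within_sym k x y : within e k x y -> within e k y x.
Proof.
elim: k x y => [|k IH] x y; first by rewrite /= eq_sym.
rewrite within_S; case/orP => [h|/existsP[w /andP[h1 h2]]]; first by apply/within_mono/IH.
apply: (within_pre _ (IH _ _ h1)); by rewrite esym.
Qed.

Lemma within1 x y : within e 1 x y = (x == y) || e x y.
Proof.
rewrite /=; congr (_ || _); apply/existsP/idP => [[z /andP[/eqP-> //]]|h].
by exists x; rewrite eqxx.
Qed.

Hypothesis hall : forall x y, within e 3 x y.
Hypothesis hex : exists x y, ~~ within e 2 x y.

Lemma n_ge4 : 4 <= n.
Proof.
case: hex => x0 [y0 hn].
have := hall x0 y0; rewrite (within_S 2) (negbTE hn) orFb => /existsP[z /andP[hz ezy]].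
have nz1 : ~~ within e 1 x0 z.
  apply: contra hn => h; exact: within_step h ezy.
move: hz; rewrite (within_S 1) (negbTE nz1) orFb => /existsP[w /andP[hw ewz]].
move: hw; rewrite within1 => /orP[/eqP exw|exw].
  by move: nz1; rewrite within1 exw ewz orbT.
have n2 : ~~ within e 1 x0 y0 by apply: contra hn; apply: within_mono.
have ne1 : x0 != w by apply: (contraFneq _ (eirr x0)) => {2}->; exact: exw.
have ne2 : w != z by apply: (contraFneq _ (eirr w)) => {2}->; exact: ewz.
have ne3 : z != y0 by apply: (contraFneq _ (eirr z)) => {2}->; exact: ezy.
have ne4 : x0 != z by apply: contra nz1 => /eqP->; rewrite within1 eqxx.
have ne5 : x0 != y0 by apply: contra n2 => /eqP->; rewrite within1 eqxx.
have ne6 : w != y0 by apply: contra n2 => /eqP<-; rewrite within1 exw orbT.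
have u : uniq [:: x0; w; z; y0].
  by rewrite /= !inE !negb_or ne1 ne2 ne3 ne4 ne5 ne6.
have := uniq_leq_size u (fun t _ => mem_enum 'I_n t).
by rewrite size_enum_ord.
Qed.

Definition dd x y := dist e x y.

Lemma dist_spec x y : [/\ dd x y <= 3, within e (dd x y) x y &
   forall k, within e k x y -> dd x y <= k].
Proof.
have n4 := n_ge4.
set p := fun k => within e k x y.
have hp : has p (iota 0 n).
  by apply/hasP; exists 3; [rewrite mem_iota /= add0n; apply: leq_trans n4 | exact: hall].
have fl : find p (iota 0 n) < n by rewrite -{2}(size_iota 0 n) -has_find.
have le3 : find p (iota 0 n) <= 3.
  rewrite leqNgt; apply/negP => /(before_find 0).
  by rewrite nth_iota ?add0n ?(leq_trans _ n4) //= /p hall.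
split => //.
  have := nth_find 0 hp; by rewrite nth_iota // add0n.
move=> k hk; rewrite leqNgt; apply/negP => lt.
have := before_find 0 lt; rewrite nth_iota ?add0n ?(ltn_trans lt fl) //.
by rewrite /p hk.
Qed.

Lemma dist_le3 x y : dd x y <= 3. Proof. by case: (dist_spec x y). Qed.
Lemma dist_within x y : within e (dd x y) x y. Proof. by case: (dist_spec x y). Qed.
Lemma dist_min k x y : within e k x y -> dd x y <= k. Proof. by case: (dist_spec x y) => _ _; apply. Qed.

Lemma dist_sym x y : dd x y = dd y x.
Proof.
apply/eqP; rewrite eqn_leq; apply/andP; split; apply: dist_min; apply: within_sym; exact: dist_within.
Qed.

Lemma dist0 x y : (dd x y == 0) = (x == y).
Proof.
apply/idP/idP => [/eqP h|/eqP->].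
  by have := dist_within x y; rewrite h.
by rewrite -leqn0; apply: dist_min; rewrite /= eqxx.
Qed.

Lemma dist_xx x : dd x x = 0. Proof. by apply/eqP; rewrite dist0. Qed.

Lemma dist1 x y : (dd x y == 1) = e x y.
Proof.
apply/idP/idP => [/eqP h|h].
  have := dist_within x y; rewrite h within1 => /orP[/eqP exy|//].
  by move: h; rewrite exy dist_xx.
have ne : x != y by apply: contraFneq _ (eirr x) => {2}->.
rewrite eqn_leq dist_min ?within1 ?h ?orbT //= lt0n dist0 //.
Qed.

Lemma dist_adj x y z : e y z -> dd x z <= (dd x y).+1.
Proof. by move=> h; apply: dist_min; apply: within_step h; apply: dist_within. Qed.

Lemma dist_down x y k : dd x y = k.+1 -> exists z, dd x z = k /\ e z y.
Proof.
move=> h; have := dist_within x y; rewrite h within_S.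
have nk : ~~ within e k x y by apply/negP => /dist_min; rewrite h ltnn.
rewrite (negbTE nk) orFb => /existsP[z /andP[hz ezy]]; exists z; split => //.
apply/eqP; rewrite eqn_leq dist_min //=.
by have := dist_adj x ezy; rewrite h ltnS.
Qed.

Variables (b c : nat -> nat).
Hypothesis hcnt : forall x y, dd x y <= 3 ->
   #|[set z | e y z && (dd x z == (dd x y).-1)]| = c (dd x y)
/\ #|[set z | e y z && (dd x z == (dd x y).+1)]| = b (dd x y).

Lemma pair3 : exists x y, dd x y = 3.
Proof.
case: hex => x [y hn]; exists x, y; apply/eqP; rewrite eqn_leq dist_le3 /=.
rewrite ltnNge; apply: contra hn => h; exact: within_le h (dist_within x y).
Qed.

Lemma pair_at j : j <= 3 -> exists x y, dd x y = j.
Proof.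
have [x [y h3]] := pair3.
have [z [h2 _]] := dist_down h3.
have [w [h1 _]] := dist_down h2.
case: j => [|[|[|[|//]]]] _.
- by exists x, x; rewrite dist_xx.
- by exists x, w.
- by exists x, z.
- by exists x, y.
Qed.

Lemma c_pos j : 1 <= j <= 3 -> 0 < c j.
Proof.
case/andP; case: j => // j _ hj.
have [x [y h]] := pair_at hj.
have [z [hz ezy]] := dist_down h.
have := @hcnt x y (leq_trans (eq_leq h) hj); rewrite h => -[<- _].
apply/card_gt0P; exists z; rewrite inE /= hz eqxx andbT; by rewrite esym.
Qed.

Lemma b_pos j : j <= 2 -> 0 < b j.
Proof.
move=> hj; have [x [y h]] := pair_at (j := j.+1) hj.
have [z [hz ezy]] := dist_down h.
have h3 : dd x z <= 3 by rewrite hz (leq_trans hj).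
have := @hcnt x z h3; rewrite hz => -[_ <-].
apply/card_gt0P; exists y; by rewrite inE ezy h eqxx.
Qed.

Lemma c1 : c 1 = 1.
Proof.
have [x [y h]] := pair_at (j := 1) isT.
have := @hcnt x y (dist_le3 x y); rewrite h => -[<- _].
rewrite /= -(cards1 x); apply: eq_card => z; rewrite !inE dist0.
apply/idP/idP => [/andP[_ /eqP <-]//|/eqP->]; by rewrite eqxx andbT esym -dist1 h.
Qed.

Lemma b3 : b 3 = 0.
Proof.
have [x [y h]] := pair3.
have := @hcnt x y (dist_le3 x y); rewrite h => -[_ <-].
apply/eqP; rewrite cards_eq0; apply/eqP/setP => z; rewrite !inE.
have := dist_le3 x z; case: (dd x z) => [|[|[|[|[|k]]]]] //= _; by rewrite andbF.
Qed.

Lemma deg x : #|[set z | e x z]| = b 0.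
Proof.
have := @hcnt x x (dist_le3 x x); rewrite dist_xx => -[_ <-].
apply: eq_card => z; rewrite !inE dist1.
by case: (e x z).
Qed.

Variable R : realType.
Local Open Scope ring_scope.

Definition comb (f : nat -> R) : 'M[R]_n := \matrix_(x, y) f (dd x y).
Notation AA := (adjacency R e).
Notation ia := (inter_a R b c).

Lemma sum_ind (P : pred 'I_n) (t : R) :
  \sum_z (P z)%:R * t = #|[set z | P z]|%:R * t.
Proof.
rewrite -big_distrl /=; congr (_ * _).
rewrite cardsE -sum1_card natr_sum [RHS]big_mkcond /=; apply: eq_bigr => z _.
by rewrite unfold_in; case: (P z).
Qed.

Lemma KL f : AA *m comb f =
  comb (fun i => (c i)%:R * f i.-1 + ia i * f i + (b i)%:R * f i.+1).
Proof.
apply/matrixP => x y; rewrite !mxE.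
under eq_bigr => z _ do rewrite !mxE (dist_sym z y).
set i := dd x y.
have pt : forall z, (e x z)%:R * f (dd y z) =
   (e x z && (dd y z == i.-1))%:R * (f i.-1 - f i)
 + (e x z && (dd y z == i.+1))%:R * (f i.+1 - f i) + (e x z)%:R * f i.
  move=> z; case exz: (e x z); last by rewrite !mul0r !addr0.
  have h1 : (dd y z <= (dd y x).+1)%N := dist_adj y exz.
  have h2 : (dd y x <= (dd y z).+1)%N := dist_adj y (etrans (esym z x) exz).
  rewrite (dist_sym y x) -/i in h1 h2.
  case: (eqVneq (dd y z) i.-1) => [->|n1] /=.
    have -> : (i.-1 == i.+1) = false by apply/negbTE; case: (i) => //= m; lia.
    by rewrite !mul1r mul0r addr0 subrK.
  case: (eqVneq (dd y z) i.+1) => [->|n2] /=.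
    by rewrite !mul1r mul0r add0r subrK.
  case: (posnP i) => i0.
    have exy : x = y by apply/eqP; rewrite -dist0 -/i i0.
    have hyz : dd y z = 1%N by apply/eqP; rewrite dist1 -exy exz.
    by move: n2; rewrite hyz i0 eqxx.
  have -> : dd y z = i by lia.
  by rewrite !mul0r !add0r.
rewrite (eq_bigr _ (fun z _ => pt z)) !big_split /= !sum_ind.
have [hc hb] := @hcnt y x (dist_le3 y x).
rewrite (dist_sym y x) -/i in hc hb.
rewrite hc hb deg /inter_a; ring.
Qed.

Definition X (i : nat) := comb (fun j => (j == i)%:R).

Ltac cmb := apply/matrixP => ? ?; rewrite /X /comb !mxE;
  match goal with |- context [dd ?x ?y] =>
  have := dist_le3 x y; case: (dd x y) => [|[|[|[|?]]]] //= _ end.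

Lemma comb_dec f : comb f = f 0%N *: X 0 + f 1%N *: X 1 + f 2%N *: X 2 + f 3%N *: X 3.
Proof. cmb; ring. Qed.

Lemma comb_ext f g : (forall i, (i <= 3)%N -> f i = g i) -> comb f = comb g.
Proof. move=> h; apply/matrixP => x y; rewrite !mxE; exact/h/dist_le3. Qed.

Lemma comb_inj f g : comb f = comb g -> forall j, (j <= 3)%N -> f j = g j.
Proof.
move=> h j hj; have [x [y hxy]] := pair_at hj.
by have := congr1 (fun M : 'M[R]_n => M x y) h; rewrite !mxE hxy.
Qed.

Lemma X0 : X 0 = 1%:M.
Proof. apply/matrixP => x y; rewrite /X /comb !mxE dist0; by case: (x == y). Qed.

Lemma X1 : X 1 = AA.
Proof. apply/matrixP => x y; rewrite /X /comb !mxE dist1 //. Qed.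

Lemma comb_tr f : (comb f)^T = comb f.
Proof. apply/matrixP => x y; by rewrite !mxE dist_sym. Qed.

Lemma AA_tr : AA^T = AA.
Proof. apply/matrixP => x y; by rewrite !mxE esym. Qed.

Lemma had_comb f g : hadamard (comb f) (comb g) = comb (fun i => f i * g i).
Proof. by apply/matrixP => x y; rewrite !mxE. Qed.

Lemma AX1 : AA *m X 1 = (c 2)%:R *: X 2 + ia 1 *: X 1 + (b 0)%:R *: X 0.
Proof. rewrite KL; cmb; rewrite /inter_a; ring. Qed.

Lemma AX2 : AA *m X 2 = (c 3)%:R *: X 3 + ia 2 *: X 2 + (b 1)%:R *: X 1.
Proof. rewrite KL; cmb; rewrite /inter_a; ring. Qed.

Lemma AX3 : AA *m X 3 = ia 3 *: X 3 + (b 2)%:R *: X 2.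
Proof. rewrite KL; cmb; rewrite /inter_a; ring. Qed.

Lemma natr_nz j : (0 < j)%N -> (j%:R : R) != 0.
Proof. by rewrite pnatr_eq0 -lt0n. Qed.

Definition l2 (t : R) := (t * t - ia 1 * t - (b 0)%:R) / (c 2)%:R.
Definition l3 (t : R) := (t * l2 t - ia 2 * l2 t - (b 1)%:R * t) / (c 3)%:R.

Lemma solve_scal (M E : 'M[R]_n) (a r : R) :
  a != 0 -> a *: M = r *: E -> M = (r / a) *: E.
Proof. by move=> a0 h; rewrite mulrC -scalerA -h scalerA mulVf // scale1r. Qed.

Section Eig.
Variables (E : 'M[R]_n) (t : R).
Hypotheses (Etr : E^T = E) (Eid : E *m E = E) (Eeig : (E :=: eigenspace AA t)%MS).

Lemma EA : E *m AA = t *: E.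
Proof. by apply/eigenspaceP; rewrite Eeig. Qed.

Lemma AE : AA *m E = t *: E.
Proof. by rewrite -{1}AA_tr -{1}Etr -trmx_mul EA linearZ /= Etr. Qed.

Lemma X2E : X 2 *m E = l2 t *: E.
Proof.
have := congr1 (fun M => M *m E) AX1; rewrite /= -mulmxA X1 AE -scalemxAr AE scalerA.
rewrite !mulmxDl -!scalemxAl X0 mul1mx AE.
move: (X 2 *m E) => M2 h; apply: solve_scal (natr_nz (c_pos (j := 2) isT)) _.
apply/matrixP => x y; move/matrixP: h => /(_ x y); rewrite !mxE => h; lra.
Qed.

Lemma X3E : X 3 *m E = l3 t *: E.
Proof.
have := congr1 (fun M => M *m E) AX2; rewrite /= -mulmxA X2E -scalemxAr AE scalerA.
rewrite !mulmxDl -!scalemxAl X2E X1 AE.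
move: (X 3 *m E) => M2 h; apply: solve_scal (natr_nz (c_pos (j := 3) isT)) _.
apply/matrixP => x y; move/matrixP: h => /(_ x y); rewrite !mxE => h; lra.
Qed.

Lemma rel3 : E != 0 -> t * l3 t = ia 3 * l3 t + (b 2)%:R * l2 t.
Proof.
move=> nz; have := congr1 (fun M => M *m E) AX3; rewrite /= -mulmxA X3E -scalemxAr AE scalerA.
rewrite !mulmxDl -!scalemxAl X2E X3E !scalerA -scalerDl => /eqP.
rewrite -subr_eq0 -scalerBl scaler_eq0 (negbTE nz) orbF subr_eq0 => /eqP.
by rewrite mulrC.
Qed.

Lemma combE f : comb f *m E = (f 0%N + f 1%N * t + f 2%N * l2 t + f 3%N * l3 t) *: E.
Proof.
rewrite comb_dec !mulmxDl -!scalemxAl X0 mul1mx X1 AE X2E X3E !scalerA -!scalerDl.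
by [].
Qed.

Lemma ASE s : (AA - s%:M) *m E = (t - s) *: E.
Proof. by rewrite mulmxBl AE mul_scalar_mx scalerBl. Qed.

Lemma EAS s : E *m (AA - s%:M) = (t - s) *: E.
Proof. by rewrite mulmxBr EA mul_mx_scalar scalerBl. Qed.

Lemma ASE4 s0 s1 s2 s3 :
  (AA - s0%:M) *m ((AA - s1%:M) *m ((AA - s2%:M) *m (AA - s3%:M))) *m E
  = ((t - s0) * (t - s1) * (t - s2) * (t - s3)) *: E.
Proof.
rewrite -!mulmxA ASE; do 3! rewrite -scalemxAr ASE scalerA. congr (_ *: _); ring.
Qed.
End Eig.

Lemma KLt f s : (AA - s%:M) *m comb f =
  comb (fun i => (c i)%:R * f i.-1 + ia i * f i + (b i)%:R * f i.+1 - s * f i).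
Proof. rewrite mulmxBl KL mul_scalar_mx; apply/matrixP => x y; by rewrite !mxE. Qed.

Lemma lam_indep (w0 w1 w2 w3 t0 t1 t2 t3 : R) :
  t0 != t1 -> t0 != t2 -> t0 != t3 -> t1 != t2 -> t1 != t3 -> t2 != t3 ->
  (forall t, t \in [:: t0; t1; t2; t3] -> w0 + w1 * t + w2 * l2 t + w3 * l3 t = 0) ->
  [/\ w0 = 0, w1 = 0, w2 = 0 & w3 = 0].
Proof.
move=> n01 n02 n03 n12 n13 n23 hp.
have C2 := natr_nz (c_pos (j := 2) isT).
have C3 := natr_nz (c_pos (j := 3) isT).
set c2 := (c 2)%:R in C2; set c3 := (c 3)%:R in C3.
set A1 := ia 1; set A2 := ia 2; set B0 : R := (b 0)%:R; set B1 : R := (b 1)%:R.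
pose be3 := w3 / (c2 * c3).
pose be2 := w2 / c2 - w3 * (A1 + A2) / (c2 * c3).
pose be1 := w1 - w2 * A1 / c2 + w3 * (A1 * A2 - B0 - B1 * c2) / (c2 * c3).
pose be0 := w0 - w2 * B0 / c2 + w3 * A2 * B0 / (c2 * c3).
have key : forall t, w0 + w1 * t + w2 * l2 t + w3 * l3 t
   = be3 * t * t * t + be2 * t * t + be1 * t + be0.
  by move=> t; rewrite /l3 /l2 -/c2 -/c3 -/A1 -/A2 -/B0 -/B1 /be3 /be2 /be1 /be0; field; apply/andP.
have m1 : t1 \in [:: t0; t1; t2; t3] by rewrite !inE eqxx !orbT.
have m2 : t2 \in [:: t0; t1; t2; t3] by rewrite !inE eqxx !orbT.
have m3 : t3 \in [:: t0; t1; t2; t3] by rewrite !inE eqxx !orbT.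
have [e3 e2 e1 e0] := cubic0 n01 n02 n03 n12 n13 n23
  (etrans (Logic.eq_sym (key t0)) (hp _ (mem_head _ _)))
  (etrans (Logic.eq_sym (key t1)) (hp _ m1))
  (etrans (Logic.eq_sym (key t2)) (hp _ m2))
  (etrans (Logic.eq_sym (key t3)) (hp _ m3)).
have f3 : w3 = 0.
  by move: e3; rewrite /be3 => /eqP; rewrite mulf_eq0 invr_eq0 mulf_eq0 (negbTE C2) (negbTE C3) !orbF => /eqP.
have f2 : w2 = 0.
  by move: e2; rewrite /be2 f3 !mul0r subr0 => /eqP; rewrite mulf_eq0 invr_eq0 (negbTE C2) !orbF => /eqP.
have f1 : w1 = 0 by move: e1; rewrite /be1 f3 f2 !mul0r subr0 addr0.
by move: e0; rewrite /be0 f3 f2 f1 !mul0r subr0 addr0.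
Qed.

Lemma main (th : 'I_4 -> R) (E : 'I_4 -> 'M[R]_n) (q11 : 'I_4 -> R) :
  (forall i j : 'I_4, (i < j)%N -> th j < th i) ->
  (forall i, eigenvalue AA (th i)) ->
  th (inord 1) = ia 3%N ->
  (forall i, orth_proj_eigenspace AA (E i) (th i)) ->
  hadamard (E (inord 1)) (E (inord 1))
    = (n%:R)^-1 *: \sum_(h < 4) q11 h *: E h ->
  let bG := ia 3%N - ia 1%N in
  let bound := - (bG * (bG * (b 2%N)%:R + (c 2%N)%:R)) / ((b 2%N)%:R + (c 2%N)%:R) in
  [/\ 0 < q11 (inord 2),
      (0 <= q11 (inord 3) <-> bound <= th (inord 3)) &
      bound <= th (inord 3)].
Proof.
move=> mono eig shil proj H bG bound.
have Etr i : (E i)^T = E i by case: (proj i).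
have Eid i : E i *m E i = E i by case: (proj i).
have Eeig i : (E i :=: eigenspace AA (th i))%MS by case: (proj i).
have Enz i : E i != 0.
  by rewrite -mxrank_eq0 (Eeig i) mxrank_eq0; exact: eig i.
have thne i j : i != j -> th i != th j.
  move=> ij; case: (ltngtP i j) => [l|l|/val_inj e0].
  - by rewrite gt_eqF ?mono.
  - by rewrite lt_eqF ?mono.
  - by rewrite e0 eqxx in ij.
have EE j k : j != k -> E j *m E k = 0.
  move=> jk; have h1 : E j *m AA *m E k = th j *: (E j *m E k).
    by rewrite (EA (Eeig j)) -scalemxAl.
  have h2 : E j *m AA *m E k = th k *: (E j *m E k).
    by rewrite -mulmxA (AE (Etr k) (Eeig k)) scalemxAr.
  have : (th j - th k) *: (E j *m E k) = 0 by rewrite scalerBl -h1 -h2 subrr.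
  by move/eqP; rewrite scaler_eq0 subr_eq0 (negbTE (thne _ _ jk)) /= => /eqP.
pose o0 : 'I_4 := inord 0; pose o1 : 'I_4 := inord 1.
pose o2 : 'I_4 := inord 2; pose o3 : 'I_4 := inord 3.
have ne : forall i j : nat, (i <= 3)%N -> (j <= 3)%N -> i != j -> (inord i : 'I_4) != inord j.
  by move=> i j hi hj ij; rewrite -val_eqE /= !inordK.
have n01 : th o0 != th o1 by apply: thne; apply: ne.
have n02 : th o0 != th o2 by apply: thne; apply: ne.
have n03 : th o0 != th o3 by apply: thne; apply: ne.
have n12 : th o1 != th o2 by apply: thne; apply: ne.
have n13 : th o1 != th o3 by apply: thne; apply: ne.
have n23 : th o2 != th o3 by apply: thne; apply: ne.
pose N := (AA - (th o0)%:M) *m ((AA - (th o2)%:M) *m (AA - (th o3)%:M)).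
have [nu hnu] : exists nu, N = comb nu.
  by rewrite /N -[AA - (th o3)%:M]mulmx1 -X0 /X !KLt; eexists.
have [om hom] : exists om, (AA - (th o1)%:M) *m N = comb om.
  by rewrite hnu KLt; eexists.
have Pz : forall k, k \in [:: o0; o1; o2; o3] ->
    om 0%N + om 1%N * th k + om 2%N * l2 (th k) + om 3%N * l3 (th k) = 0.
  move=> k hk.
  have : comb om *m E k = 0.
    rewrite -hom /N (ASE4 (Etr k) (Eeig k)).
    move: hk; rewrite !inE => /or4P[] /eqP ->; apply/eqP;
      rewrite scaler_eq0; apply/orP; left; apply/eqP; rewrite subrr; ring.
  rewrite (combE (Etr k) (Eeig k)) => /eqP; rewrite scaler_eq0 (negbTE (Enz k)) orbF => /eqP //.
have [w0 w1 w2 w3] : [/\ om 0%N = 0, om 1%N = 0, om 2%N = 0 & om 3%N = 0].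
  apply: lam_indep n01 n02 n03 n12 n13 n23 _ => t.
  by rewrite !inE => /or4P[] /eqP ->; apply: Pz; rewrite !inE eqxx ?orbT.
have Z0 : (AA - (th o1)%:M) *m N = 0.
  rewrite hom; apply/matrixP => x y; rewrite !mxE.
  by have := dist_le3 x y; case: (dd x y) => [|[|[|[|?]]]].
have Nt : N^T = N by rewrite hnu comb_tr.
have NA : N *m AA = th o1 *: N.
  have := congr1 trmx Z0; rewrite trmx_mul Nt linearB /= AA_tr tr_scalar_mx trmx0.
  by rewrite mulmxBr mul_mx_scalar => /eqP; rewrite subr_eq0 => /eqP.
have NE : N *m E o1 = N.
  have : (N <= E o1)%MS by rewrite (Eeig o1); apply/eigenspaceP.
  by case/submxP => D ->; rewrite -mulmxA Eid.
have EN : E o1 *m N = N.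
  by rewrite -{1}(Etr o1) -{1}Nt -trmx_mul NE Nt.
pose pi := (th o1 - th o0) * (th o1 - th o2) * (th o1 - th o3).
have pinz : pi != 0.
  by rewrite !mulf_eq0 !subr_eq0 !negb_or eq_sym n01 n12 n13.
have EN' : E o1 *m N = pi *: E o1.
  rewrite /N !mulmxA (EAS (Eeig o1)) -!scalemxAl (EAS (Eeig o1)).
  by rewrite -scalemxAl (EAS (Eeig o1)) !scalerA.
pose g := fun i => pi^-1 * nu i.
have hE1 : E o1 = comb g.
  have -> : E o1 = pi^-1 *: N by rewrite -EN EN' scalerA mulVf // scale1r.
  by rewrite hnu; apply/matrixP => x y; rewrite /comb !mxE.
have hAg : comb (fun i => (c i)%:R * g i.-1 + ia i * g i + (b i)%:R * g i.+1)
         = comb (fun i => th o1 * g i).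
  rewrite -KL -hE1 (AE (Etr o1) (Eeig o1)) hE1; apply/matrixP => x y; by rewrite /comb !mxE.
have eqj := comb_inj hAg.
have C2 := natr_nz (c_pos (j := 2) isT).
have C3 := natr_nz (c_pos (j := 3) isT).
have B2 := natr_nz (b_pos (j := 2) isT).
have t1e : th o1 = ia 3%N by rewrite /o1 shil.
have e0 := eqj 0%N isT; have e1 := eqj 1%N isT.
have e2 := eqj 2%N isT; have e3 := eqj 3%N isT.
rewrite /= t1e in e0 e1 e2 e3.
rewrite b3 mul0r addr0 in e3.
rewrite c1 mul1r in e1.
have ia0 : ia 0%N = - (c 0)%:R by rewrite /inter_a; ring.
rewrite ia0 in e0.
have g2z : g 2%N = 0.
  have : (c 3)%:R * g 2%N = 0 by lra.
  by move/eqP; rewrite mulf_eq0 (negbTE C3) /= => /eqP.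
rewrite g2z in e1 e2.
have g0e : g 0%N = bG * g 1%N by rewrite /bG; lra.
have g3e : (b 2)%:R * g 3%N = - ((c 2)%:R * g 1%N) by lra.
have g1nz : g 1%N != 0.
  apply/negP => /eqP g1z; move: (Enz o1); rewrite hE1 => /negP; apply; apply/eqP.
  have g3z : g 3%N = 0.
    by move: g3e; rewrite g1z mulr0 oppr0 => /eqP; rewrite mulf_eq0 (negbTE B2) /= => /eqP.
  apply/matrixP => x y; rewrite /comb !mxE.
  have := dist_le3 x y; case: (dd x y) => [|[|[|[|?]]]] //= _.
  by rewrite g0e g1z mulr0.
have hb0 : (b 0)%:R = ia 3%N * bG.
  apply: (mulIf g1nz); rewrite -mulrA -g0e; lra.
pose S t := g 0%N * g 0%N + g 1%N * g 1%N * t + g 2%N * g 2%N * l2 t + g 3%N * g 3%N * l3 t.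
have hq k : hadamard (E o1) (E o1) *m E k = (n%:R^-1 * q11 k) *: E k.
  rewrite H -scalemxAl mulmx_suml (bigD1 k) //= big1 ?addr0.
    by rewrite -scalemxAl Eid scalerA.
  by move=> j jk; rewrite -scalemxAl EE // scaler0.
have hq2 k : hadamard (E o1) (E o1) *m E k = S (th k) *: E k.
  by rewrite hE1 had_comb (combE (Etr k) (Eeig k)).
have hqS k : n%:R^-1 * q11 k = S (th k).
  have := hq k; rewrite hq2 => /eqP; rewrite -subr_eq0 -scalerBl scaler_eq0.
  by rewrite (negbTE (Enz k)) orbF subr_eq0 => /eqP.
set B2r : R := (b 2)%:R in B2 g3e; set C2r : R := (c 2)%:R in C2 g3e.
have Sform k : th k != ia 3%N ->
  S (th k) = g 1%N * g 1%N / B2r * ((B2r + C2r) * th k + bG * (bG * B2r + C2r)).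
  move=> tk.
  have r := rel3 (Etr k) (Eeig k) (Enz k).
  have tk' : th k - ia 3%N != 0 by rewrite subr_eq0.
  have l3e : l3 (th k) = B2r * (th k + bG) / C2r.
    apply: (mulfI tk').
    have -> : (th k - ia 3%N) * l3 (th k) = B2r * l2 (th k) by rewrite /B2r; lra.
    rewrite /l2 hb0 -/C2r /bG; field.
    by rewrite C2.
  have g3e' : g 3%N = - (C2r * g 1%N) / B2r.
    by rewrite -g3e mulrC mulKf.
  rewrite /S l3e g2z g0e g3e'; field; by rewrite B2 C2.
have n0 : (0 : R) < n%:R by rewrite ltr0n (leq_trans _ n_ge4).
have B2p : 0 < B2r by rewrite /B2r ltr0n b_pos.
have C2p : 0 < C2r by rewrite /C2r ltr0n c_pos.
have g1p : 0 < g 1%N * g 1%N by rewrite lt_def mulf_neq0 // -expr2 sqr_ge0.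
pose pos := n%:R * (g 1%N * g 1%N / B2r) * (B2r + C2r).
have posp : 0 < pos.
  by apply: mulr_gt0; [apply: mulr_gt0 => //; apply: mulr_gt0; rewrite ?invr_gt0 | apply: addr_gt0].
have hqf k : th k != ia 3%N -> q11 k = pos * (th k - bound).
  move=> tk; have := hqS k; rewrite (Sform k tk) => h.
  have -> : q11 k = n%:R * (n%:R^-1 * q11 k) by rewrite mulrA mulfV ?mul1r // gt_eqF.
  rewrite h /pos /bound -/B2r -/C2r; field.
  by rewrite gt_eqF // addr_gt0.
have t2ne : th o2 != ia 3%N by rewrite -t1e eq_sym.
have t3ne : th o3 != ia 3%N by rewrite -t1e eq_sym.
have t32 : th o3 < th o2 by apply: mono; rewrite /o2 /o3 !inordK.
have q3ge : 0 <= q11 o3.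
  have kr := krein (Etr o1) (Eid o1) (Etr o3) (Eid o3).
  rewrite hq mxtraceZ pmulr_lge0 ?tr_pos // in kr.
  by move: kr; rewrite pmulr_rge0 // invr_gt0.
have iff3 : 0 <= q11 o3 <-> bound <= th o3.
  by rewrite hqf // pmulr_rge0 // subr_ge0.
have b3le : bound <= th o3 by apply/iff3.
split => //.
rewrite -/o2 hqf // pmulr_rgt0 // subr_gt0.
exact: le_lt_trans b3le t32.
Qed.

End Graph.

Local Open Scope ring_scope.

Theorem proposition15 (R : realType) (n : nat) (e : rel 'I_n)
    (b c : nat -> nat) (th : 'I_4 -> R) (E : 'I_4 -> 'M[R]_n)
    (q11 : 'I_4 -> R) :
  distance_regular e 3 b c ->
  (* theta_0 > theta_1 > theta_2 > theta_3 are the distinct eigenvalues *)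
  (forall i j : 'I_4, (i < j)%N -> th j < th i) ->
  (forall i, eigenvalue (adjacency R e) (th i)) ->
  (forall t : R, eigenvalue (adjacency R e) t -> exists i, t = th i) ->
  (* Shilla: theta_1 = a_3 *)
  th (inord 1) = inter_a R b c 3%N ->
  (* E_i orthogonal projection onto the eigenspace of theta_i *)
  (forall i, orth_proj_eigenspace (adjacency R e) (E i) (th i)) ->
  (* q11 h = q^h_{11}:  E_1 o E_1 = (1/n) sum_h q^h_{11} E_h *)
  hadamard (E (inord 1)) (E (inord 1))
    = (n%:R)^-1 *: \sum_(h < 4) q11 h *: E h ->
  let bG := inter_a R b c 3%N - inter_a R b c 1%N in
  let bound := - (bG * (bG * (b 2%N)%:R + (c 2%N)%:R)) / ((b 2%N)%:R + (c 2%N)%:R) in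
  [/\ 0 < q11 (inord 2),
      (0 <= q11 (inord 3) <-> bound <= th (inord 3)) &
      bound <= th (inord 3)].
Proof.
move=> [esym eirr hall hex hcnt] mono eig _ shil proj H.
exact: (main esym eirr hall hex hcnt mono eig shil proj H).
Qed.
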